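(* Let $\mathbf{F}=(F_1,\ldots,F_d)$ be a vector of finite simple graphs, each with at most $n$ vertices. If $n \leq n' \leq n''$ are integers, then $P_{\mathbf{F};n'} \supseteq P_{\mathbf{F};n''}$.
   Context: For graphs $F,G$, $t^L(F,G)$ is the number of subgraphs of $G$ (not necessarily induced) isomorphic to $F$, and $t(F,G)=t^L(F,G)/t^L(F,K_{|G|})$ if $|F|\le|G|$ and $t(F,G)=0$ otherwise, where $|H|$ is the number of vertices of $H$ and $K_N$ the complete graph on $N$ vertices. Write $t(\mathbf{F},G)=(t(F_1,G),\ldots,t(F_d,G))\in\mathbb{R}^d$. The polytope from subgraph statistics is $P_{\mathbf{F};n}=\mathrm{conv}\{t(\mathbf{F},G)\mid G \text{ a graph on } n \text{ vertices}\}$. *)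

(* Defs.v *)
From HB Require Import structures.
From mathcomp Require Import all_boot all_order all_algebra.
From mathcomp Require Import reals.
Set Implicit Arguments. Unset Strict Implicit. Unset Printing Implicit Defensive.
Import Order.TTheory GRing.Theory Num.Theory.
Local Open Scope ring_scope.

Record graph := Graph { nv : nat; edges : {set {set 'I_nv}} }.

Definition simple (G : graph) : bool := [forall e in edges G, #|e| == 2]%N.

Definition complete (m : nat) : graph :=
  @Graph m [set e : {set 'I_m} | #|e| == 2]%N.

(* t^L(F,G): number of (not necessarily induced) subgraphs (S,E) of G,
   S a vertex subset, E a subset of the edges of G, which are isomorphic to F
   (i.e. there is a bijection f : V(F) -> S mapping E(F) onto E). *)
Definition tL (F G : graph) : nat :=
  #|[set SE : {set 'I_(nv G)} * {set {set 'I_(nv G)}} |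
      (SE.2 \subset edges G) &&
      [exists f : {ffun 'I_(nv F) -> 'I_(nv G)},
         [&& injectiveb f, SE.1 == f @: setT &
             SE.2 == (fun e : {set 'I_(nv F)} => f @: e) @: edges F]]]|.

Definition tdens (R : realType) (F G : graph) : R :=
  if (nv F <= nv G)%N then (tL F G)%:R / (tL F (complete (nv G)))%:R else 0.

Definition tvec (R : realType) (d : nat) (Fs : 'I_d -> graph) (G : graph)
  : 'rV[R]_d := \row_(i < d) tdens R (Fs i) G.

(* Membership in P_{F;n} = conv { t(F,G) | G simple graph on n vertices }:
   x is a convex combination of the points t(F,G), G ranging over the
   (finitely many) simple graphs on vertex set 'I_n. *)
Definition in_polytope (R : realType) (d : nat) (Fs : 'I_d -> graph) (n : nat)
  (x : 'rV[R]_d) : Prop :=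
  exists w : {ffun {set {set 'I_n}} -> R},
    [/\ forall E, 0 <= w E,
        \sum_(E | simple (@Graph n E)) w E = 1 &
        x = \sum_(E | simple (@Graph n E)) w E *: tvec R Fs (@Graph n E)].

(* Main.v *)
Require Import Defs.
From mathcomp Require Import all_boot all_order all_algebra.
From mathcomp Require Import reals.
From mathcomp Require Import ring.
Set Implicit Arguments. Unset Strict Implicit. Unset Printing Implicit Defensive.
Import Order.TTheory GRing.Theory Num.Theory.

Definition copies (F : graph) (N : nat) (E : {set {set 'I_N}}) :=
  [set SE : {set 'I_N} * {set {set 'I_N}} |
      (SE.2 \subset E) &&
      [exists f : {ffun 'I_(nv F) -> 'I_N},
         [&& injectiveb f, SE.1 == f @: setT &
             SE.2 == (fun e : {set 'I_(nv F)} => f @: e) @: edges F]]].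

Lemma tLE F N E : tL F (@Graph N E) = #|copies F E|.
Proof. by []. Qed.

Definition Gdel N (E : {set {set 'I_N.+1}}) (v : 'I_N.+1) : {set {set 'I_N}} :=
  [set e : {set 'I_N} | lift v @: e \in E].

Lemma copies_card F N (E : {set {set 'I_N}}) C : C \in copies F E -> #|C.1| = nv F.
Proof.
rewrite inE => /andP[_ /existsP[f /and3P[/injectiveP fi /eqP -> _]]].
by rewrite card_imset // cardsT card_ord.
Qed.

Lemma copies_del F N (E : {set {set 'I_N.+1}}) v :
  #|copies F (Gdel E v)| = #|[set C in copies F E | v \notin C.1]|.
Proof.
pose phi (C : {set 'I_N} * {set {set 'I_N}}) :=
  (lift v @: C.1, (fun e : {set 'I_N} => lift v @: e) @: C.2).
have phi_inj : injective phi.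
  move=> [S1 E1] [S2 E2] [] /(imset_inj lift_inj) -> /(imset_inj (imset_inj lift_inj)) ->.
  by [].
rewrite -(card_imset _ phi_inj); apply: eq_card => C.
apply/imsetP/idP.
- move=> [[S1 E1]]; rewrite inE /= => /andP[sub /existsP[f /and3P[/injectiveP fi /eqP eS /eqP eE]]] ->.
  rewrite !inE /=; apply/andP; split; last first.
    by apply/imsetP => -[y _ /eqP]; rewrite (negbTE (neq_lift _ _)).
  apply/andP; split.
    apply/subsetP => e' /imsetP[e He ->]; move/subsetP: sub => /(_ e He).
    by rewrite inE.
  apply/existsP; exists [ffun x => lift v (f x)]; apply/and3P; split.
  - by apply/injectiveP => x y; rewrite !ffunE => /lift_inj /fi.
  - rewrite eS -imset_comp; apply/eqP; apply: eq_imset => x; by rewrite ffunE.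
  - rewrite eE -imset_comp; apply/eqP; apply: eq_imset => e /=.
    rewrite -imset_comp; apply: eq_imset => x; by rewrite ffunE.
- rewrite !inE => /andP[/andP[sub /existsP[f /and3P[/injectiveP fi /eqP eS /eqP eE]]] vC].
  have hx : forall x, exists y, lift v y = f x.
    move=> x; have : v != f x.
      by apply: contraNneq vC => ->; rewrite eS; apply: imset_f.
    by move=> /unlift_some [y -> _]; exists y.
  have [g hg] := fin_all_exists hx.
  have gi : injective g by move=> x y /(congr1 (lift v)); rewrite !hg => /fi.
  have eS' : lift v @: (g @: setT) = C.1.
    by rewrite eS -imset_comp; apply: eq_imset => x /=; rewrite hg.
  have eE' : (fun e : {set 'I_N} => lift v @: e) @: ((fun e : {set 'I_(nv F)} => g @: e) @: edges F) = C.2.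
    rewrite eE -imset_comp; apply: eq_imset => e /=.
    rewrite -imset_comp; apply: eq_imset => x /=; by rewrite hg.
  exists (g @: setT, (fun e : {set 'I_(nv F)} => g @: e) @: edges F); last first.
    by rewrite /phi /= eS' eE'; case: C {vC sub eS eE eS' eE'}.
  rewrite inE /=; apply/andP; split.
    apply/subsetP => e' /imsetP[e He ->]; rewrite inE.
    move/subsetP: sub; apply; rewrite -eE'; apply: imset_f; exact: imset_f.
  apply/existsP; exists [ffun x => g x]; apply/and3P; split.
  - by apply/injectiveP => x y; rewrite !ffunE => /gi.
  - by apply/eqP; apply: eq_imset => x; rewrite ffunE.
  - apply/eqP; apply: eq_imset => e /=; apply: eq_imset => x; by rewrite ffunE.
Qed.
Lemma sum_del F N (E : {set {set 'I_N.+1}}) :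
  (\sum_(v : 'I_N.+1) #|copies F (Gdel E v)| = #|copies F E| * (N.+1 - nv F))%N.
Proof.
have h v : #|[set C in copies F E | v \notin C.1]| =
   (\sum_(C in copies F E) (v \notin C.1 : nat))%N.
  rewrite -sum1_card big_mkcond /= [RHS]big_mkcond; apply: eq_bigr => C _.
  by rewrite inE; case: (C \in _); case: (v \in _).
under eq_bigr => v _ do rewrite copies_del h.
rewrite exchange_big /= -sum_nat_const; apply: eq_bigr => C HC.
rewrite -(copies_card HC); have e := cardC C.1; rewrite card_ord in e.
have -> : (\sum_(v < N.+1) (v \notin C.1) = #|[predC C.1]|)%N.
  rewrite -sum1_card [RHS]big_mkcond /=; apply: eq_bigr => v _.
  by rewrite inE.
by rewrite -[X in (X - _)%N]e addKn.
Qed.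
Local Open Scope ring_scope.
Lemma Gdel_complete N (v : 'I_N.+1) : Gdel (edges (complete N.+1)) v = edges (complete N).
Proof. by apply/setP => e; rewrite !inE card_imset //; exact: lift_inj. Qed.

Lemma simple_del N (E : {set {set 'I_N.+1}}) v :
  simple (Graph E) -> simple (Graph (Gdel E v)).
Proof.
move=> /forall_inP h; apply/forall_inP => e; rewrite inE => /h.
by rewrite card_imset //; exact: lift_inj.
Qed.

Lemma copies_complete_pos F N : simple F -> (nv F <= N)%N ->
  (0 < #|copies F (edges (complete N))|)%N.
Proof.
move=> /forall_inP sF hk; pose f := [ffun x => widen_ord hk x].
have fi : injective f by move=> x y; rewrite !ffunE; move/(congr1 val) => /= h; exact: val_inj.
apply/card_gt0P; exists (f @: setT, (fun e : {set 'I_(nv F)} => f @: e) @: edges F).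
rewrite inE /=; apply/andP; split.
  apply/subsetP => e' /imsetP[e He ->]; rewrite inE card_imset //; exact: sF.
apply/existsP; exists f; apply/and3P; split => //; exact/injectiveP.
Qed.

Lemma tdens_del (R : realType) F N (E : {set {set 'I_N.+1}}) : simple F -> (nv F <= N)%N ->
  tdens R F (Graph E) = (N.+1%:R)^-1 * \sum_(v : 'I_N.+1) tdens R F (Graph (Gdel E v)).
Proof.
move=> sF hk; rewrite /tdens /= (leqW hk) hk.
rewrite !tLE -mulr_suml -natr_sum sum_del.
have hK : (N.+1 * #|copies F (edges (complete N))| =
    #|copies F (edges (complete N.+1))| * (N.+1 - nv F))%N.
  rewrite -sum_del; under eq_bigr => v _ do rewrite Gdel_complete.
  by rewrite sum_nat_const card_ord.
have K'0 := copies_complete_pos sF hk.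
have c0 : (0 < N.+1 - nv F)%N by rewrite subn_gt0 ltnS.
have K0 : (0 < #|copies F (edges (complete N.+1))|)%N.
  by apply: copies_complete_pos => //; exact: leqW.
have hKR : (N.+1%:R * #|copies F (edges (complete N))|%:R =
    #|copies F (edges (complete N.+1))|%:R * (N.+1 - nv F)%:R :> R)%R.
  by rewrite -!natrM hK.
have -> : (#|copies F (edges (complete N))|%:R =
   #|copies F (edges (complete N.+1))|%:R * (N.+1 - nv F)%:R / N.+1%:R :> R)%R.
  by rewrite -hKR mulrC mulKf // pnatr_eq0.
rewrite natrM; field.
apply/and3P; split.
- by rewrite -(natrD _ 1 N) pnatr_eq0.
- by rewrite pnatr_eq0 -lt0n.
- by rewrite pnatr_eq0 -lt0n; exact: K0.
Qed.
Lemma tvec_del (R : realType) d (Fs : 'I_d -> graph) N (E : {set {set 'I_N.+1}}) :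
  (forall i, simple (Fs i)) -> (forall i, (nv (Fs i) <= N)%N) ->
  tvec R Fs (Graph E) = (N.+1%:R)^-1 *: \sum_(v : 'I_N.+1) tvec R Fs (Graph (Gdel E v)).
Proof.
move=> sF hk; apply/rowP => i; rewrite !mxE summxE (tdens_del _ _ (sF i) (hk i)).
by congr (_ * _); apply: eq_bigr => v _; rewrite mxE.
Qed.

Lemma sum_ite (T : finType) (V : nmodType) (P : pred T) (a : T) (G : T -> V) :
  P a -> \sum_(x | P x) (if a == x then G x else 0) = G a.
Proof.
move=> Pa; rewrite (bigD1 a) //= eqxx big1 ?addr0 // => x /andP[_ hx].
by rewrite eq_sym (negbTE hx).
Qed.

Lemma poly_step (R : realType) d (Fs : 'I_d -> graph) N (x : 'rV[R]_d) :
  (forall i, simple (Fs i)) -> (forall i, (nv (Fs i) <= N)%N) ->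
  in_polytope Fs N.+1 x -> in_polytope Fs N x.
Proof.
move=> sF hk [w [w0 w1 wx]].
pose c := (N.+1%:R : R)^-1.
have c0 : 0 <= c by rewrite invr_ge0 ler0n.
exists [ffun E' => \sum_(E | simple (Graph E)) \sum_(v : 'I_N.+1)
          (if Gdel E v == E' then c * w E else 0)]; split.
- move=> E'; rewrite ffunE; apply: sumr_ge0 => E _; apply: sumr_ge0 => v _.
  by case: eqP => _ //; rewrite mulr_ge0.
- under eq_bigr do rewrite ffunE.
  rewrite exchange_big /= -w1; apply: eq_bigr => E sE; rewrite exchange_big /=.
  under eq_bigr => v _ do rewrite (sum_ite (fun _ => c * w E) (simple_del v sE)).
  rewrite sumr_const card_ord -mulr_natr mulrAC mulVf ?mul1r //.
  by rewrite pnatr_eq0.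
- rewrite wx; symmetry.
  under eq_bigr do rewrite ffunE scaler_suml.
  rewrite exchange_big /=; apply: eq_bigr => E sE.
  under eq_bigr do rewrite scaler_suml.
  rewrite exchange_big /=.
  have h v : \sum_(E' | simple (Graph E'))
      (if Gdel E v == E' then c * w E else 0) *: tvec R Fs (Graph E') =
      (c * w E) *: tvec R Fs (Graph (Gdel E v)).
    apply: etrans (sum_ite (fun E' : {set {set 'I_N}} => (c * w E) *: tvec R Fs (Graph E')) (simple_del v sE)).
    by apply: eq_bigr => E' _; case: eqP => _ //; rewrite scale0r.
  under eq_bigr => v _ do rewrite h.
  by rewrite (tvec_del R E sF hk) -scaler_sumr scalerA mulrC.
Qed.

Theorem proposition2p7 (R : realType) (d : nat) (Fs : 'I_d -> graph)
    (n n' n'' : nat) :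
  (forall i, simple (Fs i)) ->
  (forall i, (nv (Fs i) <= n)%N) ->
  (n <= n')%N -> (n' <= n'')%N ->
  forall x : 'rV[R]_d, in_polytope Fs n'' x -> in_polytope Fs n' x.
Proof.
move=> sF hn hnn'; elim: n'' => [|m IH] h x Hx.
  by move: h; rewrite leqn0 => /eqP ->.
move: h; rewrite leq_eqVlt => /orP[/eqP -> //| h].
apply: IH => //; apply: poly_step Hx => //.
by move=> i; apply: leq_trans (hn i) (leq_trans hnn' _).
Qed.
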